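(* Let $L$ be an oriented, ordered virtual link diagram with components $L_1,\dots,L_n$ and affine bilabeling $C$. Let $C'$ be another affine bilabeling in which some or all components have a different starting point, with the same starting bilabels. For component $i$ write $A_i=a^{(i)}_1+a^{(i)}_2$ and let $n_i$ be its weight. Track the classical crossings passed in going along $L_i$ from its starting point in $C$ to its starting point in $C'$: - let $O_i$ be the set of passages where $L_i$ is the overstrand; - let $U_i$ be the set of passages where $L_i$ is the understrand; - let $I_i$ be the total index change of $L_i$ along this path. Write $p_{(L,C)}=\sum_d\operatorname{sgn}(d)\,t_{o(d)}^{W_C(d)}-\mathrm{writhe}(L)$. Then $p_{(L,C')}$ is obtained from $p_{(L,C)}$ by: - replacing $A_i$ with $A_i-I_i$ for every $i$; and - multiplying the monomial of the crossing involved by $t_i^{\,n_i}$ for each passage in $O_i$, and by $t_j^{-n_i}$ for each passage in $U_i$, where $j$ is the other component involved in that crossing (possibly $j=i$).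
   Context: **Diagrams.** A virtual link diagram is an oriented planar diagram of ordered closed curves $L_1,\dots,L_n$ (components) with classical and virtual crossings. **Crossing conventions.** Draw a classical crossing with both strands oriented upward. - The bottom-left-to-top-right strand has index change $-1$; the bottom-right-to-top-left strand has index change $+1$. - The crossing is positive ($\operatorname{sgn}=+1$) if the overstrand is the bottom-left-to-top-right strand, and negative otherwise. - Self-crossings have both strands on one component; external crossings have strands on different components. - The weight $n_i$ of $L_i$ is the sum of the index changes of $L_i$ over its passages through external classical crossings. **Affine bilabeling.** - Each component $L_k$ gets a starting point with bilabel $(a^{(k)}_1,a^{(k)}_2)$ of formal integer variables, distinct for different components. - The bilabel is carried along the component in its orientation and is unchanged at virtual crossings. - At a classical crossing with index change $\varepsilon$, the first entry changes by $\varepsilon$ at a self-crossing, and the second entry changes by $\varepsilon$ at an external crossing. - The discrepancy $n_k$ (in the second entry) on returning is placed at the starting point. **Weights and polynomial.** Let $|(x,y)|=x+y$. With both strands drawn upward: - if $c$ is positive, $W(c)=|\text{bottom-left}|-|\text{top-left}|$; - if $c$ is negative, $W(c)=|\text{bottom-right}|-|\text{top-right}|$. The multi-variable affine index polynomial is $p_{(L,C)}=\sum_c\operatorname{sgn}(c)(t_{o(c)}^{W(c)}-1)$ over classical crossings, where $o(c)$ is the component of the overstrand. *)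

(* Defs.v *)
(* Virtual link diagrams are encoded by their Gauss diagrams:
   virtual crossings carry no information (bilabels are unchanged there), so a
   diagram is determined by, for each component, the cyclic sequence of its
   passages through classical crossings (read from the starting point), and by
   the sign of each classical crossing. *)
From mathcomp Require Import all_boot all_algebra.
Set Implicit Arguments. Unset Strict Implicit. Unset Printing Implicit Defensive.
Import GRing.Theory Num.Theory.
Local Open Scope ring_scope.

Section VirtualLinks.
Variables (n m : nat).

(* A passage through classical crossing c : 'I_m; the boolean is true for the
   passage along the overstrand, false for the passage along the understrand. *)
Definition passage := ('I_m * bool)%type.

(* An oriented ordered virtual link diagram with components L_0..L_{n-1} and
   classical crossings 0..m-1, together with a choice of starting point on each
   component: comp_seq i lists, in orientation order starting from the starting
   point of L_i, the passages of L_i through classical crossings.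
   csign c = true iff crossing c is positive. *)
Record vdiagram := VDiagram {
  comp_seq : 'I_n -> seq passage;
  csign : 'I_m -> bool }.

Definition well_formed (L : vdiagram) : bool :=
  perm_eq (flatten [seq comp_seq L i | i <- enum 'I_n]) (enum {: 'I_m * bool}).

Definition sgn (L : vdiagram) (c : 'I_m) : int := if csign L c then 1 else -1.

(* With both strands drawn upward: the bottom-left-to-top-right strand is the
   overstrand iff the crossing is positive. *)
Definition bltr (L : vdiagram) (c : 'I_m) : passage := (c, csign L c).
Definition brtl (L : vdiagram) (c : 'I_m) : passage := (c, ~~ csign L c).

Definition index_change (L : vdiagram) (p : passage) : int :=
  if p == bltr L p.1 then -1 else 1.

Definition self_crossing (L : vdiagram) (c : 'I_m) : bool :=
  [exists i, ((c, true) \in comp_seq L i) && ((c, false) \in comp_seq L i)].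

Definition weight (L : vdiagram) (i : 'I_n) : int :=
  \sum_(p <- comp_seq L i | ~~ self_crossing L p.1) index_change L p.

(* Affine bilabeling with starting bilabels (a1 i, a2 i): the bilabel of L_i
   just before its j-th passage (j = 0 is the starting point). *)
Definition bilabel (L : vdiagram) (a1 a2 : 'I_n -> int) (i : 'I_n) (j : nat)
  : int * int :=
  (a1 i + \sum_(q <- take j (comp_seq L i) | self_crossing L q.1) index_change L q,
   a2 i + \sum_(q <- take j (comp_seq L i) | ~~ self_crossing L q.1) index_change L q).

Definition bnorm (x : int * int) : int := x.1 + x.2.

(* |incoming bilabel| and |outgoing bilabel| of a passage
   (the sum has exactly one nonzero summand for a well-formed diagram) *)
Definition in_norm (L : vdiagram) (a1 a2 : 'I_n -> int) (p : passage) : int :=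
  \sum_(i < n | p \in comp_seq L i) bnorm (bilabel L a1 a2 i (index p (comp_seq L i))).
Definition out_norm (L : vdiagram) (a1 a2 : 'I_n -> int) (p : passage) : int :=
  \sum_(i < n | p \in comp_seq L i) bnorm (bilabel L a1 a2 i (index p (comp_seq L i)).+1).

(* W(c): positive: |bottom-left| - |top-left|; negative: |bottom-right| - |top-right|.
   bottom-left = incoming of the BL->TR strand, top-left = outgoing of BR->TL,
   bottom-right = incoming of BR->TL, top-right = outgoing of BL->TR. *)
Definition Wc (L : vdiagram) (a1 a2 : 'I_n -> int) (c : 'I_m) : int :=
  if csign L c then in_norm L a1 a2 (bltr L c) - out_norm L a1 a2 (brtl L c)
  else in_norm L a1 a2 (brtl L c) - out_norm L a1 a2 (bltr L c).

Definition writhe (L : vdiagram) : int := \sum_(c < m) sgn L c.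

(* The multi-variable affine index polynomial, evaluated at t (t_i invertible):
   sum over crossings c, grouped by the overstrand component i = o(c). *)
Definition aff_index_poly (R : unitRingType) (L : vdiagram) (a1 a2 : 'I_n -> int)
  (t : 'I_n -> R) : R :=
  \sum_(i < n) \sum_(c < m | (c, true) \in comp_seq L i)
     (sgn L c)%:~R * (t i ^ (Wc L a1 a2 c) - 1).

(* Moving the starting point of L_i forward past its first k i passages. *)
Definition move_start (L : vdiagram) (k : 'I_n -> nat) : vdiagram :=
  VDiagram (fun i => rot (k i) (comp_seq L i)) (csign L).

Definition path (L : vdiagram) (k : 'I_n -> nat) (i : 'I_n) : seq passage :=
  take (k i) (comp_seq L i).
Definition Opass L k i : seq passage := [seq p <- path L k i | p.2].
Definition Upass L k i : seq passage := [seq p <- path L k i | ~~ p.2].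
Definition Itot L k i : int := \sum_(p <- path L k i) index_change L p.

(* The right-hand side: in p_(L,C) = sum_d sgn(d) t_{o(d)}^{W_C(d)} - writhe,
   replace A_i by A_i - I_i (A_i = a1 i + a2 i; realised by a1 i := a1 i - I_i),
   multiply the monomial of crossing d by t_j^{n_j} if its over-passage lies in O_j,
   and by t_{o(d)}^{-n_j} if its under-passage lies in U_j. *)
Definition moved_poly (R : unitRingType) (L : vdiagram) (a1 a2 : 'I_n -> int)
  (k : 'I_n -> nat) (t : 'I_n -> R) : R :=
  \sum_(i < n) \sum_(c < m | (c, true) \in comp_seq L i)
     (sgn L c)%:~R *
       (t i ^ (Wc L (fun j => a1 j - Itot L k j) a2 c)
        * (\prod_(j < n | (c, true) \in Opass L k j) t j ^ weight L j)
        * (\prod_(j < n | (c, false) \in Upass L k j) t i ^ (- weight L j)))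
  - (writhe L)%:~R.

End VirtualLinks.

(* Main.v *)
Require Import Defs.
From mathcomp Require Import all_boot all_algebra.
From mathcomp Require Import ring lra zify.
Local Open Scope ring_scope.
Import GRing.Theory Num.Theory.

Lemma take_in (T : eqType) (s1 s2 : seq T) p d :
  p \in s1 -> (d <= 1)%N -> take (index p s1 + d) (s1 ++ s2) = take (index p s1 + d) s1.
Proof.
move=> ps1 d1; rewrite take_cat; case: ifP => // h.
have hi : (index p s1 < size s1)%N by rewrite index_mem.
have -> : (index p s1 + d = size s1)%N by lia.
by rewrite subnn take0 cats0 take_size.
Qed.

Lemma key (T : eqType) (f : T -> int) (x y : seq T) p d :
 uniq (x ++ y) -> p \in x ++ y -> (d <= 1)%N ->
 \sum_(q <- take (index p (y ++ x) + d) (y ++ x)) f q =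
 \sum_(q <- take (index p (x ++ y) + d) (x ++ y)) f q - \sum_(q <- x) f q
   + (if p \in x then \sum_(q <- x ++ y) f q else 0).
Proof.
move=> u; rewrite mem_cat => pin d1.
case px: (p \in x).
- have py: p \notin y.
    rewrite cat_uniq in u; case/and3P: u => _ h _.
    apply/negP => py; apply: (negP h); apply/hasP; exists p => //.
  rewrite index_cat (negbTE py) index_cat px (take_in _ _ _ _ _ px d1).
  rewrite -addnA take_cat ltnNge leq_addr /= addKn !big_cat /=; ring.
- rewrite px /= in pin.
  rewrite index_cat pin index_cat px (take_in _ _ _ _ _ pin d1).
  rewrite -addnA take_cat ltnNge leq_addr /= addKn !big_cat /=; ring.
Qed.

Lemma flat_facts (I T : eqType) (s : I -> seq T) (r : seq I) :
 uniq (flatten (map s r)) ->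
 (forall i, i \in r -> uniq (s i)) /\
 (forall p i j, i \in r -> j \in r -> p \in s i -> p \in s j -> i = j).
Proof.
elim: r => [|a r IH] /=; first by split.
rewrite cat_uniq => /and3P [ua nh uf].
have [IH1 IH2] := IH uf.
have inf j p : j \in r -> p \in s j -> p \in flatten (map s r).
  by move=> jr pj; apply/flattenP; exists (s j) => //; apply: map_f.
split.
  by move=> i; rewrite inE => /orP [/eqP -> | /IH1].
move=> p i j; rewrite !inE => /orP [/eqP -> | ir] /orP [/eqP -> | jr] // pi pj.
- exfalso; apply: (negP nh); apply/hasP; exists p => //; exact: inf pj.
- exfalso; apply: (negP nh); apply/hasP; exists p => //; exact: inf pi.
- exact: IH2 pi pj.
Qed.

Theorem proposition8 (n m : nat) (L : vdiagram n m) (k : 'I_n -> nat)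
  (R : fieldType) (t : 'I_n -> R) (a1 a2 : 'I_n -> int) :
  well_formed L ->
  (forall i, k i <= size (comp_seq L i))%N ->
  (forall i, t i != 0) ->
  aff_index_poly (move_start L k) a1 a2 t = moved_poly L a1 a2 k t.
Proof.
move=> wf kle tnz.
set s := comp_seq L.
have uf : uniq (flatten [seq s i | i <- enum 'I_n]).
  by rewrite (perm_uniq wf) enum_uniq.
have [Us0 U0] := flat_facts _ _ _ _ uf.
have Us i : uniq (s i) by apply: Us0; rewrite mem_enum.
have U p i j : p \in s i -> p \in s j -> i = j by apply: U0; rewrite mem_enum.
have E p : exists i, p \in s i.
  have : p \in flatten [seq s i | i <- enum 'I_n] by rewrite (perm_mem wf) mem_enum.
  by case/flattenP => _ /mapP [i _ ->] h; exists i.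
have one (F : 'I_n -> int) p i0 : p \in s i0 -> \sum_(i < n | p \in s i) F i = F i0.
  move=> h; rewrite (big_pred1 i0) // => i /=; apply/idP/eqP => [h' | ->] //.
  exact: U h' h.
have oneR (F : 'I_n -> R) p i0 : p \in s i0 -> \sum_(i < n | p \in s i) F i = F i0.
  move=> h; rewrite (big_pred1 i0) // => i /=; apply/idP/eqP => [h' | ->] //.
  exact: U h' h.
pose flip (q : passage m) := (q.1, ~~ q.2).
have self0 i : \sum_(q <- s i | self_crossing L q.1) index_change L q = 0.
  rewrite -big_filter; set sq := [seq q <- s i | _].
  have fl q : q \in sq -> flip q \in sq.
    case: q => c b; rewrite !mem_filter /= => /andP [sc qs]; rewrite sc /=.
    case/existsP: sc => i' /andP [h1 h2].
    have ei : i' = i by apply: (U (c, b)) => //; case: b {qs} h1 h2.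
    by subst i'; case: b qs h1 h2.
  have pe : perm_eq sq (map flip sq).
    apply: uniq_perm; first by rewrite filter_uniq.
      rewrite map_inj_uniq ?filter_uniq //.
      by move=> [c b] [c' b'] [-> /negb_inj ->].
    move=> q; apply/idP/idP => [h | /mapP [q' h ->]]; last exact: fl.
    apply/mapP; exists (flip q); first exact: fl.
    by case: q {h} => c b; rewrite /flip /= negbK.
  have h : \sum_(q <- sq) index_change L q = - \sum_(q <- sq) index_change L q.
    rewrite {1}(perm_big _ pe) big_map -sumrN; apply: eq_bigr => [[c b]] _.
    rewrite /index_change /bltr /flip /=.
    by case: b; case: (csign L c); rewrite /= ?xpair_eqE ?eqxx.
  move: h; set S := \sum_(q <- sq) _ => h.
  have h2 : S *+ 2 == 0 by rewrite mulr2n {1}h addNr.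
  by apply/eqP; move: h2; rewrite mulrn_eq0.
have bn (L0 : vdiagram n m) a b i j : bnorm (bilabel L0 a b i j) =
    a i + b i + \sum_(q <- take j (comp_seq L0 i)) index_change L0 q.
  rewrite /bnorm /bilabel /= [in RHS](bigID (fun q => self_crossing L0 q.1)) /=; ring.
have wF i : weight L i = \sum_(q <- s i) index_change L q.
  by rewrite (bigID (fun q => self_crossing L q.1)) /= self0 add0r.
pose a1s := fun j => a1 j - Itot L k j.
have per i p d : p \in s i -> (d <= 1)%N ->
   bnorm (bilabel (move_start L k) a1 a2 i (index p (rot (k i) (s i)) + d)) =
   bnorm (bilabel L a1s a2 i (index p (s i) + d))
     + (if p \in Defs.path L k i then weight L i else 0).
  move=> pi d1; rewrite !bn /= /rot.
  rewrite (eq_bigr (fun q => index_change L q)) // key; last first.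
  - exact: d1.
  - by rewrite cat_take_drop.
  - by rewrite cat_take_drop.
  rewrite !cat_take_drop wF /a1s /Itot /Defs.path; ring.
have WcE (L0 : vdiagram n m) a b c :
    Wc L0 a b c = in_norm L0 a b (c,true) - out_norm L0 a b (c,false).
  by rewrite /Wc /bltr /brtl; case: (csign L0 c).
rewrite /aff_index_poly /moved_poly.
have wr : (writhe L)%:~R = \sum_(i < n) \sum_(c < m | (c,true) \in s i) (sgn L c)%:~R :> R.
  rewrite /writhe rmorph_sum (exchange_big_dep xpredT) //=.
  apply: eq_bigr => c _; case: (E (c,true)) => i0 h.
  by rewrite (oneR (fun=> (sgn L c)%:~R) _ _ h).
rewrite wr -sumrB; apply: eq_bigr => i _.
rewrite -sumrB (eq_bigl (fun c => (c,true) \in s i)); last by move=> c; rewrite /= mem_rot.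
apply: eq_bigr => c hc.
rewrite mulrBr mulr1; congr (_ - _); congr (_ * _).
case: (E (c,false)) => j0 hj0.
have inE' : in_norm (move_start L k) a1 a2 (c,true) = in_norm L a1s a2 (c,true)
   + (if (c,true) \in Defs.path L k i then weight L i else 0).
  rewrite /in_norm (eq_bigl (fun i => (c,true) \in s i)); last by move=> i'; rewrite /= mem_rot.
  rewrite (one _ _ _ hc) (one _ _ _ hc) /=.
  by have := per i (c,true) 0%N hc isT; rewrite !addn0 => ->.
have outE : out_norm (move_start L k) a1 a2 (c,false) = out_norm L a1s a2 (c,false)
   + (if (c,false) \in Defs.path L k j0 then weight L j0 else 0).
  rewrite /out_norm (eq_bigl (fun i => (c,false) \in s i)); last by move=> i'; rewrite /= mem_rot.
  rewrite (one _ _ _ hj0) (one _ _ _ hj0) /=.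
  by have := per j0 (c,false) 1%N hj0 isT; rewrite !addn1 => ->.
have P1E : \prod_(j < n | (c,true) \in Opass L k j) t j ^ weight L j
    = t i ^ (if (c,true) \in Defs.path L k i then weight L i else 0).
  case: ifP => h.
  - rewrite (big_pred1 i) // => j /=; rewrite /Opass mem_filter /=.
    apply/idP/eqP => [h' | ->] //; exact: U (mem_take h') hc.
  - rewrite big_pred0 ?expr0z // => j; rewrite /Opass mem_filter /=.
    apply/negbTE/negP => h'; have ej := U _ _ _ (mem_take h') hc; subst j.
    by rewrite h' in h.
have P2E : \prod_(j < n | (c,false) \in Upass L k j) t i ^ (- weight L j)
    = t i ^ (- if (c,false) \in Defs.path L k j0 then weight L j0 else 0).
  case: ifP => h.
  - rewrite (big_pred1 j0) // => j /=; rewrite /Upass mem_filter /=.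
    apply/idP/eqP => [h' | ->] //; exact: U (mem_take h') hj0.
  - rewrite big_pred0 ?oppr0 ?expr0z // => j; rewrite /Upass mem_filter /=.
    apply/negbTE/negP => h'; have ej := U _ _ _ (mem_take h') hj0; subst j.
    by rewrite h' in h.
rewrite P1E P2E !WcE inE' outE -!expfzDr //; congr (_ ^ _); ring.
Qed.
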